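(* For every $i\in\{1,\dots,n\}$, the control input $v_i(\mathbf p)=\mathrm{sat}(v_i^{\mathrm{ms}}(\mathbf p)+v_i^{\mathrm{cv}}(\mathbf p))$ is locally Lipschitz with respect to $\mathbf p$ on $\mathbb{R}^{dn}$.
   Context: Setting: $n\ge2$ robots in $\mathbb{R}^d$, positions $p_i\in\mathbb{R}^d$, configuration $\mathbf p=[p_1^\top,\dots,p_n^\top]^\top\in\mathbb{R}^{dn}$; fixed sample points $q_1,\dots,q_m\in\mathbb{R}^d$; constants $\beta>0$, $\sigma_1>0$, $\sigma_2>0$, $\varepsilon\in(0,1)$, $r_{\mathrm{avoid}}>0$, $v_{\max}>0$. Mass: $P_k(\mathbf p)=\frac1n\sum_{i=1}^n e^{-\beta\|q_k-p_i\|^2}$. Meanshift command: $v_i^{\mathrm{ms}}(\mathbf p)=\dfrac{\frac{\sigma_1}{m}\sum_{k=1}^m P_k(\mathbf p)^{-1}e^{-\beta\|q_k-p_i\|^2}(q_k-p_i)}{\sum_{k=1}^m P_k(\mathbf p)^{-1}e^{-\beta\|q_k-p_i\|^2}}$. Repulsive term: $\tilde v_i^{\mathrm{cv}}=\sigma_2\sum_{j\ne i,\ \|p_i-p_j\|\le r_{\mathrm{avoid}}}\frac{r_{\mathrm{avoid}}-\|p_i-p_j\|}{\|p_i-p_j\|+\varepsilon}(p_i-p_j)$. With $\varphi=\min\{\|v_i^{\mathrm{ms}}\|^2/\varepsilon,1\}$, the gain is $\kappa_2=\varphi$ if $(v_i^{\mathrm{ms}})^\top\tilde v_i^{\mathrm{cv}}\ge0$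 and $\kappa_2=\varphi\min\{-(1-\varepsilon)\|v_i^{\mathrm{ms}}\|^2/((v_i^{\mathrm{ms}})^\top\tilde v_i^{\mathrm{cv}}),1\}$ if $(v_i^{\mathrm{ms}})^\top\tilde v_i^{\mathrm{cv}}<0$; collision-avoidance command $v_i^{\mathrm{cv}}=\kappa_2\tilde v_i^{\mathrm{cv}}$. Saturation: $\mathrm{sat}(z)=v_{\max}z/\|z\|$ if $\|z\|>v_{\max}$, and $\mathrm{sat}(z)=z$ otherwise. *)

(* Defs.v *)
From HB Require Import structures.
From mathcomp Require Import all_boot all_order all_algebra.
From mathcomp Require Import reals.
From mathcomp Require Import sequences exp.
Set Implicit Arguments. Unset Strict Implicit. Unset Printing Implicit Defensive.
Import Order.TTheory GRing.Theory Num.Theory.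
Local Open Scope ring_scope.

Section Defs.
Variables (R : realType) (d n m : nat).

(* vectors of R^d are row vectors 'rV[R]_d; configurations p = (p_1,...,p_n)
   are functions 'I_n -> 'rV[R]_d (an element of R^{dn}) *)
Definition vec := 'rV[R]_d.
Definition config := 'I_n -> vec.

Definition dotv (u v : vec) : R := \sum_(k < d) u 0 k * v 0 k.
Definition enorm (u : vec) : R := Num.sqrt (dotv u u).

Definition cdist (p q : config) : R :=
  Num.sqrt (\sum_(i < n) enorm (p i - q i) ^+ 2).

Definition mass (beta : R) (q : 'I_m -> vec) (p : config) (k : 'I_m) : R :=
  n%:R^-1 * \sum_(i < n) expR (- beta * enorm (q k - p i) ^+ 2).

Definition v_ms (beta sigma1 : R) (q : 'I_m -> vec) (p : config) (i : 'I_n)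
  : vec :=
  ((sigma1 / m%:R) *
     (\sum_(k < m) (mass beta q p k)^-1 * expR (- beta * enorm (q k - p i) ^+ 2))^-1)
  *: \sum_(k < m) ((mass beta q p k)^-1 * expR (- beta * enorm (q k - p i) ^+ 2))
                   *: (q k - p i).

Definition v_rep (sigma2 eps ravoid : R) (p : config) (i : 'I_n) : vec :=
  sigma2 *: \sum_(j < n | (j != i) && (enorm (p i - p j) <= ravoid))
     ((ravoid - enorm (p i - p j)) / (enorm (p i - p j) + eps)) *: (p i - p j).

Definition kappa2 (eps : R) (vms vt : vec) : R :=
  let phi := Num.min (enorm vms ^+ 2 / eps) 1 in
  if 0 <= dotv vms vt then phi
  else phi * Num.min (- (1 - eps) * enorm vms ^+ 2 / dotv vms vt) 1.

Definition v_cv (beta sigma1 sigma2 eps ravoid : R) (q : 'I_m -> vec)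
  (p : config) (i : 'I_n) : vec :=
  kappa2 eps (v_ms beta sigma1 q p i) (v_rep sigma2 eps ravoid p i)
  *: v_rep sigma2 eps ravoid p i.

Definition sat (vmax : R) (z : vec) : vec :=
  if vmax < enorm z then (vmax / enorm z) *: z else z.

Definition control (beta sigma1 sigma2 eps ravoid vmax : R) (q : 'I_m -> vec)
  (p : config) (i : 'I_n) : vec :=
  sat vmax (v_ms beta sigma1 q p i + v_cv beta sigma1 sigma2 eps ravoid q p i).

Definition locally_lipschitz (f : config -> vec) : Prop :=
  forall p0 : config, exists r : R, exists L : R, 0 < r /\
    forall p p' : config, cdist p0 p < r -> cdist p0 p' < r ->
      enorm (f p - f p') <= L * cdist p p'.

End Defs.

(* Main.v *)
Require Import Defs.
From HB Require Import structures.
From mathcomp Require Import all_boot all_order all_algebra.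
From mathcomp Require Import reals.
From mathcomp Require Import sequences exp.
From mathcomp Require Import ring lra.
Import Order.TTheory GRing.Theory Num.Theory.
Local Open Scope ring_scope.
Set Implicit Arguments. Unset Strict Implicit. Unset Printing Implicit Defensive.

Section Norms.
Variables (R : realType) (d : nat).
Local Notation en := (@enorm R d).
Local Notation dt := (@dotv R d).

Lemma dt_ge0 (u : 'rV[R]_d) : 0 <= dt u u.
Proof. by apply: sumr_ge0 => k _; rewrite -expr2 sqr_ge0. Qed.

Lemma en_ge0 (u : 'rV[R]_d) : 0 <= en u.
Proof. exact: sqrtr_ge0. Qed.

Lemma en_sq (u : 'rV[R]_d) : en u ^+ 2 = dt u u.
Proof. by rewrite /enorm sqr_sqrtr // dt_ge0. Qed.

Lemma coord_le (u : 'rV[R]_d) k : `|u 0 k| <= en u.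
Proof.
rewrite -sqrtr_sqr /enorm; apply: ler_wsqrtr.
rewrite /dotv (bigD1 k) //= expr2 lerDl.
by apply: sumr_ge0 => j _; rewrite -expr2 sqr_ge0.
Qed.

Lemma sum_sq_le (I : Type) (s : seq I) (f : I -> R) :
  (forall i, 0 <= f i) -> \sum_(i <- s) f i ^+ 2 <= (\sum_(i <- s) f i) ^+ 2.
Proof.
move=> f0; elim: s => [|a s IH]; first by rewrite !big_nil expr0n.
rewrite !big_cons.
have h1 : 0 <= \sum_(i <- s) f i by apply: sumr_ge0.
have h2 := f0 a. nra.
Qed.

Lemma en_le_sum (u : 'rV[R]_d) : en u <= \sum_k `|u 0 k|.
Proof.
have h0 : 0 <= \sum_k `|u 0 k| by apply: sumr_ge0.
rewrite -(ger0_norm h0) -sqrtr_sqr /enorm; apply: ler_wsqrtr.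
apply: (le_trans _ (@sum_sq_le _ (index_enum _) (fun k => `|u 0 k|) (fun k => normr_ge0 _))).
by apply: ler_sum => k _; rewrite real_normK ?num_real // expr2.
Qed.

Lemma dt_expand (u v : 'rV[R]_d) :
  dt (u + v) (u + v) = dt u u + 2 * dt u v + dt v v.
Proof.
rewrite /dotv mulr_sumr -!big_split /=; apply: eq_bigr => k _; rewrite !mxE; ring.
Qed.

Lemma cs (u v : 'rV[R]_d) : dt u v <= en u * en v.
Proof.
set a := en u; set b := en v.
have ha : 0 <= a := en_ge0 u. have hb : 0 <= b := en_ge0 v.
have hsum : 0 <= \sum_k (b * u 0 k - a * v 0 k) ^+ 2.
  by apply: sumr_ge0 => k _; rewrite sqr_ge0.
have e : \sum_k (b * u 0 k - a * v 0 k) ^+ 2 =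
   b ^+ 2 * dt u u - 2 * a * b * dt u v + a ^+ 2 * dt v v.
  rewrite /dotv !mulr_sumr -!sumrB -big_split /=; apply: eq_bigr => k _; ring.
move: hsum; rewrite e -/(en u) -/(en v) /a /b -!en_sq -/a -/b => hsum.
case: (ltrP 0 a) => ha'; case: (ltrP 0 b) => hb'.
- have hab : 0 < a * b by rewrite mulr_gt0.
  have : 2 * a * b * dt u v <= 2 * a * b * (a * b) by nra.
  have h2ab : 0 < 2 * a * b by rewrite -mulrA mulr_gt0.
  by rewrite ler_pM2l.
- have hb0 : b = 0 by lra.
  have v0 : forall k, v 0 k = 0.
    move=> k; apply/eqP; rewrite -normr_le0 -hb0; exact: coord_le.
  rewrite hb0 mulr0 /dotv big1 // => k _; by rewrite v0 mulr0.
- have ha0 : a = 0 by lra.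
  have u0 : forall k, u 0 k = 0.
    move=> k; apply/eqP; rewrite -normr_le0 -ha0; exact: coord_le.
  rewrite ha0 mul0r /dotv big1 // => k _; by rewrite u0 mul0r.
- have ha0 : a = 0 by lra.
  have u0 : forall k, u 0 k = 0.
    move=> k; apply/eqP; rewrite -normr_le0 -ha0; exact: coord_le.
  rewrite ha0 mul0r /dotv big1 // => k _; by rewrite u0 mul0r.
Qed.

Lemma en_triangle (u v : 'rV[R]_d) : en (u + v) <= en u + en v.
Proof.
have h0 : 0 <= en u + en v by rewrite addr_ge0 // en_ge0.
rewrite -(ger0_norm h0) -sqrtr_sqr {1}/enorm; apply: ler_wsqrtr.
rewrite dt_expand sqrrD !en_sq.
have := cs u v; lra.
Qed.

Lemma en_opp (u : 'rV[R]_d) : en (- u) = en u.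
Proof. by rewrite /enorm /dotv; congr Num.sqrt; apply: eq_bigr => k _; rewrite !mxE mulrNN. Qed.

Lemma en_rev (u v : 'rV[R]_d) : `|en u - en v| <= en (u - v).
Proof.
rewrite ler_norml; apply/andP; split.
- have e : en (v - u) = en (u - v) by rewrite -en_opp opprB.
  have := en_triangle (v - u) u; rewrite subrK e; lra.
- have := en_triangle (u - v) v; rewrite subrK; lra.
Qed.

End Norms.

Section LL.
Variables (R : realType) (d n : nat).
Local Notation cfg := (config R d n).
Local Notation cd := (@cdist R d n).
Local Notation en := (@enorm R d).

Lemma cd_ge0 (p q : cfg) : 0 <= cd p q.
Proof. exact: sqrtr_ge0. Qed.

Lemma cd_sym (p q : cfg) : cd p q = cd q p.
Proof.
rewrite /cdist; congr Num.sqrt; apply: eq_bigr => i _.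
by rewrite -en_opp opprB.
Qed.

Lemma cd_self (p : cfg) : cd p p = 0.
Proof.
rewrite /cdist big1 ?sqrtr0 // => i _.
rewrite subrr /enorm /dotv big1 ?sqrtr0 ?expr0n // => k _.
by rewrite mxE mul0r.
Qed.

Lemma en_le_cd (p q : cfg) j : en (p j - q j) <= cd p q.
Proof.
rewrite -(ger0_norm (en_ge0 _)) -sqrtr_sqr /cdist; apply: ler_wsqrtr.
rewrite (bigD1 j) //= lerDl.
by apply: sumr_ge0 => i _; rewrite sqr_ge0.
Qed.

Definition LLat (p0 : cfg) (f : cfg -> R) :=
  exists r L, 0 < r /\ 0 <= L /\ forall p p', cd p0 p < r -> cd p0 p' < r ->
     `|f p - f p'| <= L * cd p p'.

Lemma LL_bound p0 f : LLat p0 f ->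
  exists r B, 0 < r /\ forall p, cd p0 p < r -> `|f p| <= B.
Proof.
case=> r [L [r0 [L0 H]]]; exists r, (`|f p0| + L * r); split => // p hp.
have := H p p0 hp; rewrite cd_self r0 => /(_ isT).
rewrite cd_sym => h.
have h2 : L * cd p0 p <= L * r by rewrite ler_wpM2l // ltW.
have := ler_normD (f p - f p0) (f p0); rewrite subrK.
lra.
Qed.

Lemma LL_near p0 f : LLat p0 f -> forall e, 0 < e ->
  exists r, 0 < r /\ forall p, cd p0 p < r -> `|f p - f p0| < e.
Proof.
case=> r [L [r0 [L0 H]]] e e0.
exists (Num.min r (e / (L + 1))); split.
  by rewrite lt_min r0 /= divr_gt0 //; lra.
move=> p; rewrite lt_min => /andP[h1 h2].
have := H p p0 h1; rewrite cd_self r0 => /(_ isT); rewrite cd_sym => h.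
have hc := cd_ge0 p0 p.
move: h2; rewrite ltr_pdivlMr; last lra.
nra.
Qed.

Lemma LL_ext p0 f g : LLat p0 g ->
  (exists r, 0 < r /\ forall p, cd p0 p < r -> f p = g p) -> LLat p0 f.
Proof.
case=> r [L [r0 [L0 H]]] [r' [r'0 H']].
exists (Num.min r r'), L; split; first by rewrite lt_min r0.
split => // p p'; rewrite !lt_min => /andP[h1 h2] /andP[h3 h4].
by rewrite !H' //; apply: H.
Qed.

Lemma LL_const p0 c : LLat p0 (fun _ => c).
Proof.
exists 1, 0; do 2!split => //.
by move=> p p' _ _; rewrite subrr normr0 mul0r.
Qed.

Lemma LL_coord p0 j k : LLat p0 (fun p => p j 0 k).
Proof.
exists 1, 1; do 2!split => //.
move=> p p' _ _; rewrite mul1r.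
have := coord_le (p j - p' j) k; rewrite !mxE => h.
exact: le_trans h (en_le_cd _ _ _).
Qed.

Lemma LL_add p0 f g : LLat p0 f -> LLat p0 g -> LLat p0 (fun p => f p + g p).
Proof.
case=> r [L [r0 [L0 H]]] [r' [L' [r'0 [L'0 H']]]].
exists (Num.min r r'), (L + L'); split; first by rewrite lt_min r0.
split; first by rewrite addr_ge0.
move=> p p'; rewrite !lt_min => /andP[h1 h2] /andP[h3 h4].
have e : f p + g p - (f p' + g p') = (f p - f p') + (g p - g p') by ring.
rewrite e; apply: le_trans (ler_normD _ _) _.
have := H p p' h1 h3; have := H' p p' h2 h4; lra.
Qed.

Lemma LL_opp p0 f : LLat p0 f -> LLat p0 (fun p => - f p).
Proof.
case=> r [L [r0 [L0 H]]]; exists r, L; do 2!split => //.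
by move=> p p' h1 h2; rewrite -opprD normrN; apply: H.
Qed.

Lemma LL_sub p0 f g : LLat p0 f -> LLat p0 g -> LLat p0 (fun p => f p - g p).
Proof. by move=> hf hg; apply: LL_add => //; apply: LL_opp. Qed.

Lemma LL_mul p0 f g : LLat p0 f -> LLat p0 g -> LLat p0 (fun p => f p * g p).
Proof.
move=> hf hg.
case: (LL_bound hf) => rb [B [rb0 HB]].
case: (LL_bound hg) => rb' [B' [rb'0 HB']].
case: hf => r [L [r0 [L0 H]]]; case: hg => r' [L' [r'0 [L'0 H']]].
exists (Num.min (Num.min r r') (Num.min rb rb')), (`|B| * L' + `|B'| * L).
split; first by rewrite !lt_min r0 r'0 rb0 rb'0.
split; first by rewrite addr_ge0 // mulr_ge0.
move=> p p'; rewrite !lt_min => /andP[/andP[h1 h2] /andP[h5 h6]] /andP[/andP[h3 h4] /andP[h7 h8]].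
have e : f p * g p - f p' * g p' = f p * (g p - g p') + g p' * (f p - f p') by ring.
rewrite e; apply: le_trans (ler_normD _ _) _; rewrite !normrM.
have a1 := H p p' h1 h3; have a2 := H' p p' h2 h4.
have b1 := HB p h5; have b2 := HB' p' h8.
have c1 : `|f p| <= `|B| := le_trans b1 (ler_norm _).
have c2 : `|g p'| <= `|B'| := le_trans b2 (ler_norm _).
have := normr_ge0 (f p); have := normr_ge0 (g p');
have := normr_ge0 (f p - f p'); have := normr_ge0 (g p - g p'); have := cd_ge0 p p'.
nra.
Qed.

Lemma LL_inv p0 f : LLat p0 f -> f p0 != 0 -> LLat p0 (fun p => (f p)^-1).
Proof.
move=> hf nz.
set a := `|f p0|.
have a0 : 0 < a by rewrite normr_gt0.
have a20 : 0 < a / 2 by rewrite divr_gt0.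
case: (LL_near hf a20) => rn [rn0 Hn].
case: hf => r [L [r0 [L0 H]]].
exists (Num.min r rn), (4 * L / a ^+ 2); split; first by rewrite lt_min r0.
split; first by rewrite mulr_ge0 // ?invr_ge0 ?exprn_ge0 ?mulr_ge0 // ltW.
move=> p p'; rewrite !lt_min => /andP[h1 h2] /andP[h3 h4].
have lb : forall x, cd p0 x < rn -> a / 2 <= `|f x|.
  move=> x hx; have := Hn x hx.
  have := ler_normD (f p0 - f x) (f x); rewrite subrK distrC.
  rewrite -/a; lra.
have lp := lb p h2; have lp' := lb p' h4.
have fp : f p != 0 by rewrite -normr_gt0; lra.
have fp' : f p' != 0 by rewrite -normr_gt0; lra.
have e : (f p)^-1 - (f p')^-1 = (f p' - f p) / (f p * f p').
  by field; apply/andP.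
rewrite e normrM normrV ?unitfE ?mulf_neq0 // normrM distrC.
have P0 : 0 < `|f p| * `|f p'| by rewrite mulr_gt0 ?normr_gt0.
rewrite ler_pdivrMr //.
have hP : a ^+ 2 / 4 <= `|f p| * `|f p'|.
  have := normr_ge0 (f p); have := normr_ge0 (f p'); nra.
have Hx := H p p' h1 h3.
have hc := cd_ge0 p p'.
have ea : 4 * L / a ^+ 2 * cd p p' * (`|f p| * `|f p'|)
          = L * cd p p' * (4 * (`|f p| * `|f p'|) / a ^+ 2).
  by field; rewrite gt_eqF.
rewrite ea.
have h1' : 1 <= 4 * (`|f p| * `|f p'|) / a ^+ 2.
  by rewrite ler_pdivlMr ?exprn_gt0 //; lra.
have hLc : 0 <= L * cd p p' by rewrite mulr_ge0.
nra.
Qed.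

Lemma LL_sum p0 (I : Type) (s : seq I) (P : pred I) (F : I -> cfg -> R) :
  (forall i, P i -> LLat p0 (F i)) -> LLat p0 (fun p => \sum_(i <- s | P i) F i p).
Proof.
move=> H; elim: s => [|a s IH].
  by apply: (LL_ext (LL_const p0 0)); exists 1; split => // p _; rewrite big_nil.
case Pa: (P a).
  apply: (LL_ext (LL_add (H a Pa) IH)); exists 1; split => // p _.
  by rewrite big_cons Pa.
by apply: (LL_ext IH); exists 1; split => // p _; rewrite big_cons Pa.
Qed.

End LL.

Lemma maxL (R : realType) (a b a' b' : R) :
  `|Num.max a b - Num.max a' b'| <= `|a - a'| + `|b - b'|.
Proof.
rewrite /Num.max; case: ifP => h1; case: ifP => h2;
rewrite ler_norml; apply/andP; split;
 (case: (lerP 0 (a - a')) => ha; [rewrite (ger0_norm ha)|rewrite (ltr0_norm ha)]);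
 (case: (lerP 0 (b - b')) => hb; [rewrite (ger0_norm hb)|rewrite (ltr0_norm hb)]); lra.
Qed.

Lemma minL (R : realType) (a b a' b' : R) :
  `|Num.min a b - Num.min a' b'| <= `|a - a'| + `|b - b'|.
Proof.
rewrite /Num.min; case: ifP => h1; case: ifP => h2;
rewrite ler_norml; apply/andP; split;
 (case: (lerP 0 (a - a')) => ha; [rewrite (ger0_norm ha)|rewrite (ltr0_norm ha)]);
 (case: (lerP 0 (b - b')) => hb; [rewrite (ger0_norm hb)|rewrite (ltr0_norm hb)]); lra.
Qed.


Lemma exp_lip (R : realType) (B x y : R) : `|x| <= B -> `|y| <= B ->
  `|expR x - expR y| <= expR B * `|x - y|.
Proof.
wlog xy : x y / x <= y.
  move=> W hx hy; case: (leP x y) => h; first by apply: W.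
  by rewrite distrC (distrC x); apply: W => //; apply: ltW.
move=> hx hy.
have e1 : expR y - expR x <= expR y * (y - x).
  have := expR_ge1Dx (x - y).
  have -> : expR x = expR y * expR (x - y) by rewrite -expRD addrC subrK.
  have := expR_gt0 y; nra.
have e2 : expR x <= expR y by rewrite ler_expR.
have e3 : expR y <= expR B by rewrite ler_expR; move: hy; rewrite ler_norml => /andP[].
have yx : 0 <= y - x by lra.
have ex : 0 <= expR y - expR x by lra.
rewrite distrC (ger0_norm ex) distrC (ger0_norm yx).
have := expR_gt0 y; nra.
Qed.

Section LL2.
Variables (R : realType) (d n : nat).
Local Notation cfg := (config R d n).
Local Notation cd := (@cdist R d n).
Local Notation en := (@enorm R d).

Lemma LL_exp p0 (f : cfg -> R) : LLat p0 f -> LLat p0 (fun p => expR (f p)).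
Proof.
move=> hf; case: (LL_bound hf) => rb [B [rb0 HB]].
case: hf => r [L [r0 [L0 H]]].
exists (Num.min r rb), (expR B * L); split; first by rewrite lt_min r0.
split; first by rewrite mulr_ge0 // expR_ge0.
move=> p p'; rewrite !lt_min => /andP[h1 h2] /andP[h3 h4].
apply: le_trans (exp_lip (HB p h2) (HB p' h4)) _.
rewrite -mulrA ler_wpM2l ?expR_ge0 //; exact: H.
Qed.

Lemma LL_max p0 (f g : cfg -> R) : LLat p0 f -> LLat p0 g ->
  LLat p0 (fun p => Num.max (f p) (g p)).
Proof.
case=> r [L [r0 [L0 H]]] [r' [L' [r'0 [L'0 H']]]].
exists (Num.min r r'), (L + L'); split; first by rewrite lt_min r0.
split; first by rewrite addr_ge0.
move=> p p'; rewrite !lt_min => /andP[h1 h2] /andP[h3 h4].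
apply: le_trans (maxL _ _ _ _) _.
have := H p p' h1 h3; have := H' p p' h2 h4; lra.
Qed.

Lemma LL_min p0 (f g : cfg -> R) : LLat p0 f -> LLat p0 g ->
  LLat p0 (fun p => Num.min (f p) (g p)).
Proof.
case=> r [L [r0 [L0 H]]] [r' [L' [r'0 [L'0 H']]]].
exists (Num.min r r'), (L + L'); split; first by rewrite lt_min r0.
split; first by rewrite addr_ge0.
move=> p p'; rewrite !lt_min => /andP[h1 h2] /andP[h3 h4].
apply: le_trans (minL _ _ _ _) _.
have := H p p' h1 h3; have := H' p p' h2 h4; lra.
Qed.

Lemma frac_bound (c A M : R) : 0 < c -> 0 <= A -> c * A <= M ->
  0 <= A / M <= c^-1.
Proof.
move=> c0 A0 cAM.
case: (lerP M 0) => hM.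
  have -> : A = 0 by nra.
  by rewrite mul0r lexx invr_ge0 ltW.
apply/andP; split; first by rewrite divr_ge0 // ltW.
by rewrite ler_pdivrMr // mulrC ler_pdivlMr // mulrC.
Qed.

Lemma u_ident (c A M A' M' : R) : 0 < c -> 0 <= A -> c * A <= M -> 0 <= A' -> c * A' <= M' ->
  A * A / M - A' * A' / M' =
    (A / M) * (A - A') + (A' / M') * (A - A') + (A / M) * (A' / M') * (M' - M).
Proof.
move=> c0 A0 h A'0 h'.
case: (lerP M 0) => hM; case: (lerP M' 0) => hM'.
- have -> : A = 0 by nra. have -> : A' = 0 by nra. ring.
- have -> : A = 0 by nra. ring.
- have -> : A' = 0 by nra. ring.
- field; apply/andP; split; rewrite gt_eqF //.
Qed.

Lemma LL_u p0 (c : R) (A M : cfg -> R) : 0 < c -> (forall p, 0 <= A p) ->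
  (forall p, c * A p <= M p) -> LLat p0 A -> LLat p0 M ->
  LLat p0 (fun p => A p * A p / M p).
Proof.
move=> c0 A0 AM [r [L [r0 [L0 H]]]] [r' [L' [r'0 [L'0 H']]]].
exists (Num.min r r'), (2 / c * L + 1 / c ^+ 2 * L'); split; first by rewrite lt_min r0.
split; first by rewrite addr_ge0 // mulr_ge0 // ?divr_ge0 // ?exprn_ge0 // ltW.
move=> p p'; rewrite !lt_min => /andP[h1 h2] /andP[h3 h4].
rewrite (u_ident c0 (A0 p) (AM p) (A0 p') (AM p')).
have /andP[x0 x1] := frac_bound c0 (A0 p) (AM p).
have /andP[y0 y1] := frac_bound c0 (A0 p') (AM p').
set x := A p / M p in x0 x1 *; set y := A p' / M p' in y0 y1 *.
clearbody x y.
have hA := H p p' h1 h3; have hM := H' p p' h2 h4.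
have hM2 : `|M p' - M p| <= L' * cd p p' by rewrite distrC.
have hD := cd_ge0 p p'.
set ci := c^-1 in x1 y1 *.
have ci0 : 0 <= ci by rewrite invr_ge0 ltW.
have -> : 2 / c * L + 1 / c ^+ 2 * L' = 2 * ci * L + ci * ci * L'.
  by rewrite /ci; field; rewrite gt_eqF.
apply: le_trans (ler_normD _ _) _; rewrite !normrM.
apply: le_trans (lerD (ler_normD _ _) (lexx _)) _; rewrite !normrM.
rewrite (ger0_norm x0) (ger0_norm y0).
set t := `|A p - A p'| in hA *; set s := `|M p' - M p| in hM2 *.
have t0 : 0 <= t by apply: normr_ge0.
have s0 : 0 <= s by apply: normr_ge0.
have e1 : x * t <= ci * (L * cd p p') by apply: ler_pM.
have e2 : y * t <= ci * (L * cd p p') by apply: ler_pM.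
have e3 : x * y <= ci * ci by apply: ler_pM.
have e4 : x * y * s <= ci * ci * (L' * cd p p') by apply: ler_pM => //; apply: mulr_ge0.
lra.
Qed.

End LL2.

Section LLV.
Variables (R : realType) (d n : nat).
Local Notation cfg := (config R d n).
Local Notation cd := (@cdist R d n).
Local Notation en := (@enorm R d).

Definition LLv p0 (f : cfg -> 'rV[R]_d) := forall k : 'I_d, LLat p0 (fun p => f p 0 k).

Lemma LL_unif p0 (I : eqType) (s : seq I) (F : I -> cfg -> R) :
  (forall k, LLat p0 (F k)) -> exists r L, 0 < r /\ 0 <= L /\
    forall k p p', k \in s -> cd p0 p < r -> cd p0 p' < r ->
      `|F k p - F k p'| <= L * cd p p'.
Proof.
move=> H; elim: s => [|a s [r [L [r0 [L0 IH]]]]].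
  by exists 1, 0; do 2!split => //.
case: (H a) => ra [La [ra0 [La0 Ha]]].
exists (Num.min r ra), (L + La); split; first by rewrite lt_min r0.
split; first by rewrite addr_ge0.
move=> k p p'; rewrite inE !lt_min => /orP[/eqP-> | ks] /andP[h1 h2] /andP[h3 h4].
- have := Ha p p' h2 h4; have := cd_ge0 p p'; nra.
- have := IH k p p' ks h1 h3; have := cd_ge0 p p'; nra.
Qed.

Lemma LLv_unif p0 f : LLv p0 f -> exists r L, 0 < r /\ 0 <= L /\
    forall p p', cd p0 p < r -> cd p0 p' < r ->
      en (f p - f p') <= L * cd p p'.
Proof.
move=> H.
case: (@LL_unif p0 _ (index_enum 'I_d) (fun k p => f p 0 k) H) => r [L [r0 [L0 HU]]].
exists r, (d%:R * L); split => //; split; first by rewrite mulr_ge0.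
move=> p p' h1 h2; apply: le_trans (en_le_sum _) _.
have hb : forall k : 'I_d, `|(f p - f p') 0 k| <= L * cd p p'.
  by move=> k; rewrite !mxE; apply: HU => //; rewrite mem_index_enum.
apply: le_trans (ler_sum _ (fun k _ => hb k)) _.
by rewrite sumr_const card_ord -(mulr_natl (L * cd p p')) mulrA.
Qed.

Lemma LL_en p0 f : LLv p0 f -> LLat p0 (fun p => en (f p)).
Proof.
case/LLv_unif => r [L [r0 [L0 H]]]; exists r, L; do 2!split => //.
move=> p p' h1 h2; apply: le_trans (en_rev _ _) _; exact: H.
Qed.

Lemma LLv_const p0 c : LLv p0 (fun _ => c).
Proof. move=> k; exact: LL_const. Qed.

Lemma LLv_pt p0 j : LLv p0 (fun p => p j).
Proof. move=> k; exact: LL_coord. Qed.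

Lemma LLv_add p0 f g : LLv p0 f -> LLv p0 g -> LLv p0 (fun p => f p + g p).
Proof.
move=> hf hg k; apply: (LL_ext (LL_add (hf k) (hg k))).
by exists 1; split => // p _; rewrite mxE.
Qed.

Lemma LLv_sub p0 f g : LLv p0 f -> LLv p0 g -> LLv p0 (fun p => f p - g p).
Proof.
move=> hf hg k; apply: (LL_ext (LL_sub (hf k) (hg k))).
by exists 1; split => // p _; rewrite !mxE.
Qed.

Lemma LLv_scale p0 s f : LLat p0 s -> LLv p0 f -> LLv p0 (fun p => s p *: f p).
Proof.
move=> hs hf k; apply: (LL_ext (LL_mul hs (hf k))).
by exists 1; split => // p _; rewrite !mxE.
Qed.

Lemma LLv_sum p0 (I : Type) (s : seq I) (P : pred I) (F : I -> cfg -> 'rV[R]_d) :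
  (forall i, P i -> LLv p0 (F i)) -> LLv p0 (fun p => \sum_(i <- s | P i) F i p).
Proof.
move=> H k; apply: (LL_ext (LL_sum s (fun i HP => H i HP k))).
by exists 1; split => // p _; rewrite summxE.
Qed.

Lemma LL_dot p0 f g : LLv p0 f -> LLv p0 g -> LLat p0 (fun p => dotv (f p) (g p)).
Proof.
move=> hf hg; apply: (LL_ext (LL_sum (index_enum 'I_d) (P := predT)
  (F := fun k p => f p 0 k * g p 0 k) (fun k _ => LL_mul (hf k) (hg k)))).
by exists 1; split => // p _.
Qed.

End LLV.

Section Main.
Variables (R : realType) (d n : nat).
Local Notation cfg := (config R d n).
Local Notation cd := (@cdist R d n).
Local Notation en := (@enorm R d).

Lemma kappa2_eq (eps : R) (a b : 'rV[R]_d) : 0 < eps -> eps < 1 ->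
  kappa2 eps a b = Num.min (dotv a a / eps) 1 *
    ((1 - eps) * dotv a a / Num.max ((1 - eps) * dotv a a) (- dotv a b)).
Proof.
move=> e0 e1; rewrite /kappa2 /= en_sq.
set A := dotv a a; set D := dotv a b.
have A0 : 0 <= A := dt_ge0 a.
have c0 : 0 < 1 - eps by lra.
case: ifP => hD.
- case: (lerP A 0) => hA.
    have -> : A = 0 by lra.
    by rewrite !mul0r min_l // mul0r.
  have cA : 0 < (1 - eps) * A by rewrite mulr_gt0.
  rewrite max_l; last by lra.
  by rewrite divff ?mulr1 // gt_eqF.
- have hD' : D < 0 by rewrite ltNge hD.
  congr (_ * _).
  have e : - (1 - eps) * A / D = (1 - eps) * A / (- D).
    by field; rewrite lt_eqF.
  rewrite e.
  case: (leP (- D) ((1 - eps) * A)) => h.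
  + rewrite divff; last by rewrite gt_eqF //; lra.
    rewrite min_r // ler_pdivlMr; lra.
  + rewrite min_l // ler_pdivrMr; lra.
Qed.

Lemma sat_eq (vmax : R) (z : 'rV[R]_d) : 0 < vmax ->
  sat vmax z = (vmax / Num.max vmax (en z)) *: z.
Proof.
move=> v0; rewrite /sat; case: ifP => h.
  by rewrite max_r // ltW.
rewrite max_l; last by rewrite leNgt h.
by rewrite divff ?scale1r // gt_eqF.
Qed.

Lemma LLv_sat p0 (vmax : R) (z : cfg -> 'rV[R]_d) : 0 < vmax -> LLv p0 z ->
  LLv p0 (fun p => sat vmax (z p)).
Proof.
move=> v0 hz.
have H : LLv p0 (fun p => (vmax / Num.max vmax (en (z p))) *: z p).
  apply: LLv_scale => //; apply: LL_mul; first exact: LL_const.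
  apply: LL_inv; first by apply: LL_max; [exact: LL_const | exact: LL_en].
  rewrite gt_eqF //; apply: lt_le_trans v0 _; by rewrite le_max lexx.
move=> k; apply: (LL_ext (H k)); exists 1; split => // p _.
by rewrite sat_eq.
Qed.

Lemma LLv_kappa p0 (eps : R) (a b : cfg -> 'rV[R]_d) : 0 < eps -> eps < 1 ->
  LLv p0 a -> LLv p0 b -> LLv p0 (fun p => kappa2 eps (a p) (b p) *: b p).
Proof.
move=> e0 e1 ha hb.
set c := 1 - eps.
have c0 : 0 < c by rewrite /c; lra.
set A := fun p => dotv (a p) (a p).
set M := fun p => Num.max (c * A p) (- dotv (a p) (b p)).
have LA : LLat p0 A by apply: LL_dot.
have LM : LLat p0 M.
  apply: LL_max; first by apply: LL_mul => //; exact: LL_const.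
  by apply: LL_opp; apply: LL_dot.
have A0 : forall p, 0 <= A p by move=> p; apply: dt_ge0.
have AM : forall p, c * A p <= M p by move=> p; rewrite /M le_max lexx.
have E : forall p, kappa2 eps (a p) (b p) = Num.min (A p / eps) 1 * (c * A p / M p).
  by move=> p; rewrite kappa2_eq.
case: (lerP (A p0) 0) => hA.
- have A00 : A p0 = 0 by have := A0 p0; lra.
  case: (LL_near LA e0) => r [r0 Hr].
  have Lu := LL_u c0 A0 AM LA LM.
  have H : LLv p0 (fun p => (c / eps * (A p * A p / M p)) *: b p).
    by apply: LLv_scale => //; apply: LL_mul => //; exact: LL_const.
  move=> k; apply: (LL_ext (H k)); exists r; split => // p hp.
  rewrite E min_l; last first.
    have := Hr p hp; rewrite A00 subr0 => h.
    have h' : A p < eps by move: h; rewrite ger0_norm //.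
    by rewrite ler_pdivrMr // mul1r ltW.
  by rewrite !mxE; congr (_ * _); ring.
- have H : LLv p0 (fun p => (Num.min (A p / eps) 1 * (c * A p / M p)) *: b p).
    apply: LLv_scale => //; apply: LL_mul.
      apply: LL_min; last exact: LL_const.
      by apply: LL_mul => //; exact: LL_const.
    apply: LL_mul; first by apply: LL_mul => //; exact: LL_const.
    apply: LL_inv => //; rewrite gt_eqF //.
    by apply: lt_le_trans (AM p0); rewrite mulr_gt0.
  move=> k; apply: (LL_ext (H k)); exists 1; split => // p _.
  by rewrite E.
Qed.

End Main.

Section Spec.
Variables (R : realType) (d n : nat).
Local Notation cfg := (config R d n).
Local Notation cd := (@cdist R d n).
Local Notation en := (@enorm R d).

Lemma LL_sqd p0 (x : 'rV[R]_d) j : LLat p0 (fun p : cfg => en (x - p j) ^+ 2).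
Proof.
apply: (LL_ext (LL_dot (LLv_sub (LLv_const p0 x) (LLv_pt p0 j)) (LLv_sub (LLv_const p0 x) (LLv_pt p0 j)))).
by exists 1; split => // p _; rewrite en_sq.
Qed.

Lemma mass_pos m (beta : R) (q : 'I_m -> 'rV[R]_d) (p : cfg) k (i : 'I_n) :
  0 < mass beta q p k.
Proof.
rewrite /mass mulr_gt0 //.
  by rewrite invr_gt0 ltr0n; apply: leq_ltn_trans (ltn_ord i).
rewrite (bigD1 i) //=; apply: ltr_pwDl; first exact: expR_gt0.
by apply: sumr_ge0 => j _; apply: expR_ge0.
Qed.

Lemma LL_mass p0 m (beta : R) (q : 'I_m -> 'rV[R]_d) k :
  LLat p0 (fun p : cfg => mass beta q p k).
Proof.
apply: LL_mul; first exact: LL_const.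
apply: LL_sum => j _; apply: LL_exp; apply: LL_mul; first exact: LL_const.
exact: LL_sqd.
Qed.

Lemma LLv_ms p0 m (beta sigma1 : R) (q : 'I_m -> 'rV[R]_d) (i : 'I_n) :
  LLv p0 (fun p : cfg => v_ms beta sigma1 q p i).
Proof.
have Lw : forall k, LLat p0 (fun p : cfg =>
    (mass beta q p k)^-1 * expR (- beta * en (q k - p i) ^+ 2)).
  move=> k; apply: LL_mul.
    apply: LL_inv; first exact: LL_mass.
    by rewrite gt_eqF // (mass_pos _ _ _ _ i).
  by apply: LL_exp; apply: LL_mul; [exact: LL_const | exact: LL_sqd].
apply: LLv_scale.
  apply: LL_mul; first exact: LL_const.
  case: m q Lw => [|m] q Lw.
    apply: (LL_ext (LL_const p0 0)); exists 1; split => // p _.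
    by rewrite big_ord0 invr0.
  apply: LL_inv; first exact: LL_sum.
  rewrite gt_eqF // (bigD1 ord0) //=; apply: ltr_pwDl.
    by rewrite mulr_gt0 ?expR_gt0 // invr_gt0 (mass_pos _ _ _ _ i).
  apply: sumr_ge0 => k _; rewrite mulr_ge0 ?expR_ge0 // invr_ge0 ltW //.
  exact: (mass_pos _ _ _ _ i).
apply: LLv_sum => k _; apply: LLv_scale; first exact: Lw.
by apply: LLv_sub; [exact: LLv_const | exact: LLv_pt].
Qed.

Lemma LLv_rep p0 (sigma2 eps ravoid : R) (i : 'I_n) : 0 < eps ->
  LLv p0 (fun p : cfg => v_rep sigma2 eps ravoid p i).
Proof.
move=> e0.
have H : LLv p0 (fun p : cfg => sigma2 *: \sum_(j < n | j != i)
   (Num.max (ravoid - en (p i - p j)) 0 / (en (p i - p j) + eps)) *: (p i - p j)).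
  apply: LLv_scale; first exact: LL_const.
  apply: LLv_sum => j _.
  have Le : LLat p0 (fun p : cfg => en (p i - p j)).
    by apply: LL_en; apply: LLv_sub; exact: LLv_pt.
  apply: LLv_scale; last by apply: LLv_sub; exact: LLv_pt.
  apply: LL_mul.
    by apply: LL_max; [apply: LL_sub => //; exact: LL_const | exact: LL_const].
  apply: LL_inv; first by apply: LL_add => //; exact: LL_const.
  by rewrite gt_eqF // ltr_pwDr // en_ge0.
move=> k; apply: (LL_ext (H k)); exists 1; split => // p _.
rewrite /v_rep big_mkcondr; congr (((_ *: _) : 'rV_d) 0 k).
apply: eq_bigr => j _; case: ifP => h.
  by rewrite max_l // subr_ge0.
rewrite max_r ?mul0r ?scale0r //.
by rewrite subr_le0 ltW // ltNge h.
Qed.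

End Spec.


Unset Implicit Arguments.
Set Strict Implicit.

Theorem lemma7 (R : realType) (d n m : nat) (q : 'I_m -> 'rV[R]_d)
  (beta sigma1 sigma2 eps ravoid vmax : R) :
  (2 <= n)%N -> 0 < beta -> 0 < sigma1 -> 0 < sigma2 ->
  0 < eps -> eps < 1 -> 0 < ravoid -> 0 < vmax ->
  forall i : 'I_n,
    locally_lipschitz
      (fun p : config R d n => control beta sigma1 sigma2 eps ravoid vmax q p i).
Proof.
move=> hn hb hs1 hs2 he0 he1 hr hv i p0.
have ha := LLv_ms p0 beta sigma1 q i.
have hc : LLv p0 (fun p : config R d n => control beta sigma1 sigma2 eps ravoid vmax q p i).
  apply: LLv_sat => //; apply: LLv_add => //.
  exact: (LLv_kappa he0 he1 ha (LLv_rep p0 sigma2 ravoid i he0)).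
case: (LLv_unif hc) => r [L [r0 [_ H]]]; exists r, L; split => //.
Qed.
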